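(* Let $1\le p<\infty$ and let $\nu$ be a modulus of variation with $\nu(k)\uparrow\infty$ and $\nu(k)/k^{1/p}$ nonincreasing with limit $0$. Let $f$ be a continuous $2\pi$-periodic function. Then $f\in V_p[\nu]$ if and only if the sequence $\{F_n\}$ of Fejér means of $f$ is bounded in $V_p[\nu]$, i.e. $\sup_n\|F_n\|_{p,\nu}<\infty$.
   Context: A modulus of variation is a nondecreasing concave sequence of positive numbers. The Fejér kernel is $K_n(t)=\frac{2}{n+1}\Big(\frac{\sin\frac12(n+1)t}{2\sin\frac12t}\Big)^2$ and the Fejér mean is $F_n(x)=\frac1\pi\int_{-\pi}^{\pi}f(x+t)K_n(t)\,dt$. For a $2\pi$-periodic $g$, $\upsilon_p(n,g)=\sup(\sum_{j=1}^n|g(I_j)|^p)^{1/p}$ over $n$ nonoverlapping subintervals $I_j$ of a period interval $[a,b]=[a,a+2\pi]$, with $g(I)=g(\sup I)-g(\inf I)$; $\|g\|_{p,\nu}=\sup_n\upsilon_p(n,g)/\nu(n)+\sup_{x\in[a,b]}|g(x)|$, and $V_p[\nu]$ is the set of $g$ with $\|g\|_{p,\nu}<\infty$. *)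

(* Defs.v *)
From Stdlib Require Import Reals Lra.
From Coquelicot Require Import Coquelicot.
Open Scope R_scope.

(* x^y for x >= 0 and y > 0, with the convention 0^y = 0. *)
Definition powr (x y : R) : R :=
  if Req_EM_T x 0 then 0 else Rpower x y.

Fixpoint psum (F : nat -> R) (n : nat) : R :=
  match n with O => 0 | S m => psum F m + F m end.

(* A modulus of variation: a positive, nondecreasing, concave sequence
   nu(1), nu(2), ... (indices k >= 1; nu 0 is irrelevant). *)
Definition modulus_of_variation (nu : nat -> R) : Prop :=
  (forall k, (1 <= k)%nat -> 0 < nu k) /\
  (forall k, (1 <= k)%nat -> nu k <= nu (S k)) /\
  (forall k, (1 <= k)%nat -> nu (S (S k)) - nu (S k) <= nu (S k) - nu k).

Definition periodic2pi (f : R -> R) : Prop := forall x, f (x + 2 * PI) = f x.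

(* Fejer kernel, extended by continuity ((n+1)/2) where sin(t/2) = 0. *)
Definition fejer_kernel (n : nat) (t : R) : R :=
  if Req_EM_T (sin (t / 2)) 0 then (INR n + 1) / 2
  else 2 / (INR n + 1) * (sin ((INR n + 1) * t / 2) / (2 * sin (t / 2))) ^ 2.

Definition fejer_mean (f : R -> R) (n : nat) (x : R) : R :=
  / PI * RInt (fun t => f (x + t) * fejer_kernel n t) (- PI) PI.

Definition nonoverlapping_family (a : R) (n : nat) (s t : nat -> R) : Prop :=
  (forall j, (j < n)%nat -> a <= s j <= t j /\ t j <= a + 2 * PI) /\
  (forall i j, (i < n)%nat -> (j < n)%nat -> i <> j -> t i <= s j \/ t j <= s i).

Definition pvar_sum (p : R) (g : R -> R) (n : nat) (s t : nat -> R) : R :=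
  powr (psum (fun j => powr (Rabs (g (t j) - g (s j))) p) n) (/ p).

(* Vp_bounded_by p nu a g C : both sup_n v_p(n,g)/nu(n) <= C and
   sup_{x in [a,a+2pi]} |g x| <= C; hence ||g||_{p,nu} <= 2C, and
   ||g||_{p,nu} <= C implies Vp_bounded_by ... C. *)
Definition Vp_bounded_by (p : R) (nu : nat -> R) (a : R) (g : R -> R) (C : R) : Prop :=
  (forall n s t, (1 <= n)%nat -> nonoverlapping_family a n s t ->
     pvar_sum p g n s t <= C * nu n) /\
  (forall x, a <= x <= a + 2 * PI -> Rabs (g x) <= C).

Definition in_Vp (p : R) (nu : nat -> R) (a : R) (g : R -> R) : Prop :=
  exists C, Vp_bounded_by p nu a g C.

Definition bounded_in_Vp (p : R) (nu : nat -> R) (a : R) (G : nat -> R -> R) : Prop :=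
  exists C, forall n, Vp_bounded_by p nu a (G n) C.

(* Main.v *)
Require Import Defs.
From Stdlib Require Import Reals Lra Lia.
From Coquelicot Require Import Coquelicot.
Open Scope R_scope.

Lemma powr_ge0 x y : 0 <= powr x y.
Proof. unfold powr. destruct (Req_EM_T x 0). lra. unfold Rpower. left; apply exp_pos. Qed.

Lemma powr_0 y : powr 0 y = 0.
Proof. unfold powr. destruct (Req_EM_T 0 0); lra. Qed.

Lemma powr_pos x y : 0 < x -> powr x y = Rpower x y.
Proof. intros. unfold powr. destruct (Req_EM_T x 0); [lra|auto]. Qed.

Lemma powr_gt0 x y : 0 < x -> 0 < powr x y.
Proof. intros; rewrite powr_pos; auto. unfold Rpower; apply exp_pos. Qed.

Lemma powr_le x y e : 0 <= x <= y -> 0 <= e -> powr x e <= powr y e.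
Proof.
  intros [H1 H2] He. destruct (Req_dec x 0) as [->|Hx].
  rewrite powr_0; apply powr_ge0.
  rewrite !powr_pos by lra. apply Rle_Rpower_l; lra.
Qed.

Lemma powr_mult x y e : 0 <= x -> 0 <= y -> powr (x*y) e = powr x e * powr y e.
Proof.
  intros Hx Hy. destruct (Req_dec x 0) as [->|Hx'].
  rewrite Rmult_0_l, !powr_0; ring.
  destruct (Req_dec y 0) as [->|Hy'].
  rewrite Rmult_0_r, !powr_0; ring.
  rewrite !powr_pos by nra. rewrite Rpower_mult_distr; auto; lra.
Qed.

Lemma powr_inv x e : 0 <= x -> 0 < e -> powr (powr x e) (/ e) = x.
Proof.
  intros Hx He. destruct (Req_dec x 0) as [->|Hx'].
  rewrite !powr_0; auto.
  rewrite (powr_pos x) by lra. rewrite powr_pos by (unfold Rpower; apply exp_pos).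
  rewrite Rpower_mult. rewrite Rinv_r by lra. apply Rpower_1; lra.
Qed.

Lemma powr_inv' x e : 0 <= x -> 0 < e -> powr (powr x (/ e)) e = x.
Proof.
  intros Hx He. rewrite <- (Rinv_inv e) at 2. apply powr_inv; auto.
  apply Rinv_0_lt_compat; auto.
Qed.

Lemma powr_le_inv x y p : 0 <= x -> 0 <= y -> 0 < p -> powr x (/ p) <= y -> x <= powr y p.
Proof.
  intros Hx Hy Hp H. rewrite <- (powr_inv' x p) by auto.
  apply powr_le; [split; [apply powr_ge0|auto]|lra].
Qed.

Lemma powr_le_inv2 x y p : 0 <= x -> 0 <= y -> 0 < p -> x <= powr y p -> powr x (/ p) <= y.
Proof.
  intros Hx Hy Hp H. rewrite <- (powr_inv y p) by auto.
  apply powr_le; [split; auto|]. left; apply Rinv_0_lt_compat; auto.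
Qed.

Lemma Rpower_1_base y : Rpower 1 y = 1.
Proof. unfold Rpower. rewrite ln_1, Rmult_0_r. apply exp_0. Qed.

Lemma powr_le_self x p : 0 <= x <= 1 -> 1 <= p -> powr x p <= x.
Proof.
  intros Hx Hp. destruct (Req_dec x 0) as [->|Hx'].
  rewrite powr_0; lra.
  rewrite powr_pos by lra. rewrite <- (Rpower_1 x) at 2 by lra.
  unfold Rpower. apply exp_le_3 || idtac.
  assert (ln x <= 0). { rewrite <- ln_1. destruct (Req_dec x 1). subst; lra. left; apply ln_increasing; lra. }
  destruct (Rle_lt_or_eq_dec _ _ (Rmult_le_compat_neg_l (ln x) 1 p H Hp)) as [h|h].
  left; apply exp_increasing; lra. right; f_equal; lra.
Qed.

Lemma powr_2 p : 1 <= p -> 2 <= powr 2 p.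
Proof.
  intros Hp. rewrite powr_pos by lra. rewrite <- (Rpower_1 2) at 1 by lra.
  apply Rle_Rpower; lra.
Qed.

Lemma bernoulli x p : 0 < x -> 1 <= p -> 1 + p * (x - 1) <= Rpower x p.
Proof.
  intros Hx Hp.
  set (h := fun y => Rpower y p - p * y).
  assert (D : forall c, 0 < c -> derivable_pt_lim h c (p * Rpower c (p - 1) - p * 1)).
  { intros c Hc. unfold h. apply derivable_pt_lim_minus.
    apply derivable_pt_lim_power; auto.
    apply derivable_pt_lim_scal. apply derivable_pt_lim_id. }
  assert (h1 : h 1 = 1 - p). { unfold h. rewrite Rpower_1_base. ring. }
  destruct (Rtotal_order x 1) as [Hl|[He|Hg]].
  - destruct (MVT_cor2 h (fun c => p * Rpower c (p - 1) - p * 1) x 1 Hl) as [c [Hc1 Hc2]].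
    { intros c Hc; apply D; lra. }
    assert (Rpower c (p-1) <= 1).
    { replace 1 with (Rpower 1 (p-1)) at 2 by apply Rpower_1_base. apply Rle_Rpower_l; lra. }
    unfold h in Hc1. rewrite Rpower_1_base in Hc1.
    assert (0 <= (p * 1 - p * Rpower c (p - 1)) * (1 - x)) by (apply Rmult_le_pos; [|lra]; assert (0 <= p * (1 - Rpower c (p - 1))) by (apply Rmult_le_pos; lra); lra). nra.
  - subst. rewrite Rpower_1_base. lra.
  - destruct (MVT_cor2 h (fun c => p * Rpower c (p - 1) - p * 1) 1 x Hg) as [c [Hc1 Hc2]].
    { intros c Hc; apply D; lra. }
    assert (1 <= Rpower c (p-1)).
    { replace 1 with (Rpower c 0) at 1 by (apply Rpower_O; lra). apply Rle_Rpower; lra. }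
    unfold h in Hc1. rewrite Rpower_1_base in Hc1.
    assert (0 <= (p * Rpower c (p - 1) - p * 1) * (x - 1)) by (apply Rmult_le_pos; [|lra]; assert (0 <= p * (Rpower c (p - 1) - 1)) by (apply Rmult_le_pos; lra); lra). nra.
Qed.


Lemma support_pos p m y : 1 <= p -> 0 <= m ->
  powr m p + p * powr m (p - 1) * (y - m) <= powr (Rabs y) p.
Proof.
  intros Hp Hm. destruct (Req_dec m 0) as [->|Hm'].
  { rewrite !powr_0. assert (H:=powr_ge0 (Rabs y) p). lra. }
  assert (Hmm : powr m (p-1) * m = powr m p).
  { rewrite !powr_pos by lra. rewrite <- (Rpower_1 m) at 2 by lra.
    rewrite <- Rpower_plus. f_equal; ring. }
  assert (Hq : 0 < powr m (p-1)) by (apply powr_gt0; lra).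
  destruct (Rle_lt_dec y 0) as [Hy|Hy].
  - assert (H:=powr_ge0 (Rabs y) p).
    assert (p * powr m (p - 1) * (y - m) <= - p * powr m p).
    { rewrite <- Hmm. assert (0 <= p * powr m (p-1)) by nra. nra. }
    assert (0 <= powr m p) by apply powr_ge0. nra.
  - rewrite Rabs_pos_eq by lra.
    assert (B := bernoulli (y / m) p ltac:(apply Rdiv_lt_0_compat; lra) Hp).
    rewrite powr_pos with (x := y) by lra.
    replace y with ((y / m) * m) at 2 by (field; lra).
    rewrite <- Rpower_mult_distr by (try apply Rdiv_lt_0_compat; lra).
    rewrite <- powr_pos with (x := m) by lra. rewrite <- Hmm.
    replace (y - m) with ((y / m - 1) * m) by (field; lra).
    assert (0 < powr m (p - 1) * m) by nra.
    nra.
Qed.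

Definition sgn (m : R) := if Rle_dec 0 m then 1 else -1.
Definition slope (p m : R) := p * powr (Rabs m) (p - 1) * sgn m.

Lemma support p m y : 1 <= p ->
  powr (Rabs m) p + slope p m * (y - m) <= powr (Rabs y) p.
Proof.
  intros Hp. unfold slope, sgn. destruct (Rle_dec 0 m) as [Hm|Hm].
  - rewrite (Rabs_pos_eq m) by lra. rewrite Rmult_1_r. apply support_pos; lra.
  - rewrite (Rabs_left m) by lra. rewrite <- Rabs_Ropp.
    assert (H := support_pos p (-m) (-y) Hp ltac:(lra)). nra.
Qed.

Lemma powr_add_le x y p : 1 <= p ->
  powr (Rabs (x + y)) p <= powr 2 p * (powr (Rabs x) p + powr (Rabs y) p).
Proof.
  intros Hp. assert (Hx := powr_ge0 (Rabs x) p). assert (Hy := powr_ge0 (Rabs y) p).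
  assert (H2 := powr_ge0 2 p).
  destruct (Rle_dec (Rabs x) (Rabs y)) as [H|H].
  - apply Rle_trans with (powr (2 * Rabs y) p).
    apply powr_le; [split; [apply Rabs_pos|]|]; try lra.
    apply Rle_trans with (Rabs x + Rabs y); [apply Rabs_triang|lra].
    rewrite powr_mult by (try apply Rabs_pos; lra). nra.
  - apply Rle_trans with (powr (2 * Rabs x) p).
    apply powr_le; [split; [apply Rabs_pos|]|]; try lra.
    apply Rle_trans with (Rabs x + Rabs y); [apply Rabs_triang|lra].
    rewrite powr_mult by (try apply Rabs_pos; lra). nra.
Qed.

Lemma powr_abs_cont p l : 1 <= p -> continuity_pt (fun y => powr (Rabs y) p) l.
Proof.
  intros Hp. destruct (Req_dec l 0) as [->|Hl].
  - intros eps Heps. exists (Rmin 1 eps). split. apply Rmin_pos; lra.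
    intros y [_ Hy]. simpl in *. unfold R_dist in *.
    rewrite Rabs_R0, powr_0 in *. rewrite ?Rminus_0_r in *.
    rewrite Rabs_pos_eq by apply powr_ge0.
    assert (Rabs y < 1) by (apply Rlt_le_trans with (1 := Hy); apply Rmin_l).
    assert (Rabs y < eps) by (apply Rlt_le_trans with (1 := Hy); apply Rmin_r).
    assert (powr (Rabs y) p <= Rabs y) by (apply powr_le_self; auto; split; [apply Rabs_pos|lra]).
    lra.
  - apply continuity_pt_filterlim.
    change (continuous (fun y => powr (Rabs y) p) l).
    apply (continuous_ext_loc _ (fun y => exp (p * ln (Rabs y)))).
    + assert (Hal : 0 < Rabs l) by (apply Rabs_pos_lt; auto).
      exists (mkposreal _ Hal). intros y Hy. simpl in Hy.
      unfold ball in Hy; simpl in Hy; unfold AbsRing_ball, abs, minus, plus, opp in Hy; simpl in Hy.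
      rewrite powr_pos. reflexivity.
      unfold Rpower.
      apply Rabs_pos_lt. intros ->. rewrite Rplus_0_l, Rabs_Ropp in Hy. lra.
    + apply (@ex_derive_continuous R_AbsRing R_NormedModule). auto_derive. repeat split; auto.
      apply Rabs_pos_lt; auto.
Qed.


Definition Dk (k : nat) (t : R) := / 2 + psum (fun j => cos (INR (S j) * t)) k.
Definition Tm (m : nat) (t : R) := psum (fun k => Dk k t) (S m) / (INR m + 1).

Lemma psum_S F n : psum F (S n) = psum F n + F n.
Proof. reflexivity. Qed.

Lemma Dk_sin k t : 2 * sin (t / 2) * Dk k t = sin ((2 * INR k + 1) * (t / 2)).
Proof.
  induction k as [|k IH].
  - unfold Dk; simpl. replace ((2 * 0 + 1) * (t / 2)) with (t/2) by ring. field.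
  - unfold Dk in *. rewrite psum_S.
    replace (2 * sin (t / 2) * (/ 2 + (psum (fun j => cos (INR (S j) * t)) k + cos (INR (S k) * t))))
      with (2 * sin (t / 2) * (/ 2 + psum (fun j => cos (INR (S j) * t)) k) + 2 * sin (t/2) * cos (INR (S k) * t)) by ring.
    rewrite IH.
    replace ((2 * INR (S k) + 1) * (t / 2)) with (INR (S k) * t + t / 2) by (rewrite S_INR; field).
    replace ((2 * INR k + 1) * (t / 2)) with (INR (S k) * t - t / 2) by (rewrite S_INR; field).
    rewrite sin_plus, sin_minus. ring.
Qed.

Lemma sum_sin n u : 2 * sin u * psum (fun k => sin ((2 * INR k + 1) * u)) n = 1 - cos (2 * INR n * u).
Proof.
  induction n as [|n IH].
  - simpl. replace (2 * 0 * u) with 0 by ring. rewrite cos_0. ring.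
  - rewrite psum_S. rewrite Rmult_plus_distr_l, IH.
    replace (2 * INR (S n) * u) with ((2 * INR n + 1) * u + u) by (rewrite S_INR; ring).
    replace (2 * INR n * u) with ((2 * INR n + 1) * u - u) by ring.
    rewrite cos_plus, cos_minus. ring.
Qed.

Lemma psum_ext F G n : (forall j, (j < n)%nat -> F j = G j) -> psum F n = psum G n.
Proof.
  induction n; intros H; simpl; auto. rewrite IHn by (intros; apply H; lia). rewrite H by lia. auto.
Qed.

Lemma psum_scal c F n : c * psum F n = psum (fun j => c * F j) n.
Proof. induction n; simpl; [ring|]. rewrite <- IHn. ring. Qed.

Lemma cos_sin_mult t j : cos t = 1 -> sin t = 0 -> cos (INR j * t) = 1 /\ sin (INR j * t) = 0.
Proof.
  intros Hc Hs. induction j as [|j [IHc IHs]].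
  - simpl. rewrite Rmult_0_l, cos_0, sin_0. auto.
  - replace (INR (S j) * t) with (INR j * t + t) by (rewrite S_INR; ring).
    rewrite cos_plus, sin_plus, IHc, IHs, Hc, Hs. split; ring.
Qed.

Lemma psum_half_k n : psum (fun k => / 2 + INR k) n = INR n ^ 2 / 2.
Proof. induction n; [simpl; field|rewrite psum_S]. rewrite IHn, S_INR. field. Qed.

Lemma kernel_eq m t : fejer_kernel m t = Tm m t.
Proof.
  unfold fejer_kernel, Tm. assert (Hm : 0 < INR m + 1) by (assert (H:=pos_INR m); lra).
  destruct (Req_EM_T (sin (t / 2)) 0) as [H0|H0].
  - assert (Hc : cos t = 1).
    { replace t with (2 * (t/2)) by field. rewrite cos_2a_sin, H0. ring. }
    assert (Hs : sin t = 0).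
    { replace t with (2 * (t/2)) by field. rewrite sin_2a, H0. ring. }
    rewrite (psum_ext _ (fun k => / 2 + INR k)).
    + rewrite psum_half_k, S_INR. field. lra.
    + intros k _. unfold Dk. f_equal. rewrite (psum_ext _ (fun _ => 1)).
      * clear. induction k; [reflexivity|]. rewrite psum_S, IHk, S_INR. ring.
      * intros j _. apply cos_sin_mult; auto.
  - assert (E : 4 * sin (t/2) ^ 2 * psum (fun k => Dk k t) (S m) = 2 * sin ((INR m + 1) * t / 2) ^ 2).
    { replace (4 * sin (t / 2) ^ 2 * psum (fun k => Dk k t) (S m)) with
        (2 * sin (t/2) * psum (fun k => 2 * sin (t/2) * Dk k t) (S m))
        by (rewrite <- psum_scal; ring).
      rewrite (psum_ext _ (fun k => sin ((2 * INR k + 1) * (t / 2)))) by (intros; apply Dk_sin).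
      rewrite sum_sin. 
      replace (2 * INR (S m) * (t / 2)) with (2 * ((INR m + 1) * t / 2)) by (rewrite S_INR; field).
      rewrite cos_2a_sin. ring. }
    assert (Hs2 : 0 < sin (t/2) ^ 2) by (apply pow2_gt_0; auto).
    assert (E' : psum (fun k => Dk k t) (S m) = 2 * sin ((INR m + 1) * t / 2) ^ 2 / (4 * sin (t/2) ^ 2)).
    { apply (Rmult_eq_reg_l (4 * sin (t/2) ^ 2)); [rewrite E; field; lra | lra]. }
    rewrite E'. field. split; lra.
Qed.


Lemma cont_cos c t : continuous (fun t => cos (c * t)) t.
Proof. apply (@ex_derive_continuous R_AbsRing R_NormedModule). auto_derive. auto. Qed.

Lemma cont_psum (F : nat -> R -> R) n t : (forall j, continuous (F j) t) ->
  continuous (fun t => psum (fun j => F j t) n) t.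
Proof.
  intros H. induction n.
  - simpl. apply continuous_const.
  - simpl. apply (continuous_plus (fun t => psum (fun j => F j t) n) (F n)); auto.
Qed.

Lemma cont_Dk k t : continuous (Dk k) t.
Proof.
  unfold Dk. apply (continuous_plus (fun _ => /2) (fun t => psum (fun j => cos (INR (S j) * t)) k)).
  apply continuous_const. apply cont_psum. intros j; apply cont_cos.
Qed.

Lemma cont_K m t : continuous (fejer_kernel m) t.
Proof.
  apply (continuous_ext (Tm m)). intros; symmetry; apply kernel_eq.
  unfold Tm. apply (continuous_mult (fun t => psum (fun k => Dk k t) (S m)) (fun _ => / (INR m + 1))).
  apply cont_psum; intros; apply cont_Dk. apply continuous_const.
Qed.

Lemma sin_nPI j : sin (INR j * PI) = 0.
Proof. apply sin_eq_0_1. exists (Z.of_nat j). rewrite INR_IZR_INZ. auto. Qed.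

Lemma int_cos_c c : c <> 0 -> sin (c * PI) = 0 -> is_RInt (fun t => cos (c * t)) (- PI) PI 0.
Proof.
  intros Hc Hs.
  assert (H := is_RInt_derive (fun t => sin (c * t) / c) (fun t => cos (c * t)) (-PI) PI).
  replace 0 with (minus (sin (c * PI) / c) (sin (c * - PI) / c)).
  apply H.
  - intros x _. auto_derive. auto. field. auto.
  - intros x _. apply cont_cos.
  - unfold minus, plus, opp; simpl. replace (c * - PI) with (- (c * PI)) by ring.
    rewrite sin_neg, Hs. field; auto.
Qed.

Lemma int_cos j : is_RInt (fun t => cos (INR (S j) * t)) (- PI) PI 0.
Proof. apply int_cos_c. apply not_0_INR; lia. apply sin_nPI. Qed.


Lemma int_psum (F : nat -> R -> R) (I : nat -> R) n a b :
  (forall j, is_RInt (F j) a b (I j)) ->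
  is_RInt (fun t => psum (fun j => F j t) n) a b (psum I n).
Proof.
  intros H. induction n.
  - simpl. assert (H0 := @is_RInt_const R_NormedModule a b 0).
    unfold scal in H0; simpl in H0; unfold mult in H0; simpl in H0. rewrite Rmult_0_r in H0. exact H0.
  - simpl. apply (is_RInt_plus (fun t => psum (fun j => F j t) n) (F n)); auto.
Qed.

Lemma int_Dk k : is_RInt (Dk k) (- PI) PI PI.
Proof.
  unfold Dk. replace PI with (plus (scal (PI - - PI) (/2)) (psum (fun _ => 0) k)) at 3.
  apply (is_RInt_plus (fun _ => /2) (fun t => psum (fun j => cos (INR (S j) * t)) k)).
  apply (@is_RInt_const R_NormedModule). apply int_psum. intros; apply int_cos.
  assert (psum (fun _ => 0) k = 0) by (induction k; simpl; [auto|rewrite IHk; ring]).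
  rewrite H. unfold plus, scal; simpl; unfold mult; simpl. field.
Qed.

Lemma int_K m : is_RInt (fejer_kernel m) (- PI) PI PI.
Proof.
  apply (is_RInt_ext (Tm m)). intros; symmetry; apply kernel_eq.
  unfold Tm.
  assert (Hm : 0 < INR m + 1) by (assert (H:=pos_INR m); lra).
  apply (is_RInt_ext (fun t => scal (/ (INR m + 1)) (psum (fun k => Dk k t) (S m)))).
  { intros. unfold scal; simpl; unfold mult; simpl. unfold Rdiv; ring. }
  replace PI with (scal (/ (INR m + 1)) (psum (fun _ => PI) (S m))) at 3.
  apply (@is_RInt_scal R_NormedModule). apply int_psum. intros; apply int_Dk.
  assert (H : forall n, psum (fun _ => PI) n = INR n * PI) by (induction n; [simpl; ring|rewrite psum_S, IHn, S_INR; ring]).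
  rewrite H, S_INR. unfold scal; simpl; unfold mult; simpl. field. lra.
Qed.

Lemma K_ge0 m t : 0 <= fejer_kernel m t.
Proof.
  unfold fejer_kernel. assert (Hm : 0 < INR m + 1) by (assert (H:=pos_INR m); lra).
  destruct (Req_EM_T _ _). lra.
  apply Rmult_le_pos. left; apply Rdiv_lt_0_compat; lra. apply pow2_ge_0.
Qed.

Lemma K_bound m t d : 0 < d <= PI -> d <= Rabs t <= PI ->
  fejer_kernel m t <= / (2 * (INR m + 1) * sin (d / 2) ^ 2).
Proof.
  intros Hd Ht. assert (Hm : 0 < INR m + 1) by (assert (H:=pos_INR m); lra).
  assert (Hsd : 0 < sin (d/2)) by (apply sin_gt_0; lra).
  assert (Hst : sin (d/2) <= Rabs (sin (t/2))).
  { destruct (Rle_dec 0 t).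
    - rewrite Rabs_pos_eq in Ht by lra. rewrite Rabs_pos_eq by (apply sin_ge_0; lra).
      destruct (Rle_lt_or_eq_dec _ _ (proj1 Ht)) as [h|h]; [|subst; lra].
      left; apply sin_increasing_1; lra.
    - rewrite Rabs_left in Ht by lra. replace (t/2) with (- (-t/2)) by field.
      rewrite sin_neg, Rabs_Ropp. rewrite Rabs_pos_eq by (apply sin_ge_0; lra).
      destruct (Rle_lt_or_eq_dec _ _ (proj1 Ht)) as [h|h].
      left; apply sin_increasing_1; lra. replace (-t/2) with (d/2) by lra. lra. }
  unfold fejer_kernel. destruct (Req_EM_T _ _) as [e|e].
  { rewrite e, Rabs_R0 in Hst. lra. }
  assert (Hs2 : sin (d/2) ^ 2 <= sin (t/2) ^ 2).
  { rewrite <- (pow2_abs (sin (t/2))). apply pow_incr. lra. }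
  assert (Hsin : sin ((INR m + 1) * t / 2) ^ 2 <= 1).
  { assert (H := SIN_bound ((INR m + 1) * t / 2)). simpl. nra. }
  assert (Hpos : 0 < sin (t/2) ^ 2) by (apply pow2_gt_0; auto).
  replace (2 / (INR m + 1) * (sin ((INR m + 1) * t / 2) / (2 * sin (t / 2))) ^ 2)
    with (sin ((INR m + 1) * t / 2) ^ 2 / (2 * (INR m + 1) * sin (t / 2) ^ 2)) by (field; lra).
  unfold Rdiv. apply Rle_trans with (1 * / (2 * (INR m + 1) * sin (t / 2) ^ 2)).
  apply Rmult_le_compat_r; [left; apply Rinv_0_lt_compat; nra|lra].
  rewrite Rmult_1_l. apply Rinv_le_contravar. assert (0 < sin (d/2) ^ 2) by (apply pow2_gt_0; lra). nra.
  nra.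
Qed.


Lemma cont_shift (f : R -> R) x t : (forall y, continuous f y) -> continuous (fun t => f (x + t)) t.
Proof.
  intros Hf. apply (continuous_comp (fun t => x + t) f).
  apply (@ex_derive_continuous R_AbsRing R_NormedModule). auto_derive; auto.
  apply Hf.
Qed.

Lemma cont_mulK (h : R -> R) m t : continuous h t -> continuous (fun t => h t * fejer_kernel m t) t.
Proof. intros H. apply (continuous_mult h (fejer_kernel m)); auto. apply cont_K. Qed.

Lemma exK (h : R -> R) m : (forall t, continuous h t) -> ex_RInt (fun t => h t * fejer_kernel m t) (- PI) PI.
Proof. intros H. apply (@ex_RInt_continuous R_CompleteNormedModule). intros; apply cont_mulK; auto. Qed.

Lemma RInt_K m : RInt (fejer_kernel m) (- PI) PI = PI.
Proof. apply is_RInt_unique, int_K. Qed.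

Lemma PI_gt0 : 0 < PI. Proof. apply PI_RGT_0. Qed.

Lemma RInt_affine (h : R -> R) m A c : (forall t, continuous h t) ->
  RInt (fun t => (A + c * h t) * fejer_kernel m t) (- PI) PI =
  A * PI + c * RInt (fun t => h t * fejer_kernel m t) (- PI) PI.
Proof.
  intros Hh.
  rewrite (@RInt_ext R_CompleteNormedModule _ (fun t => plus (scal A (fejer_kernel m t)) (scal c (h t * fejer_kernel m t)))).
  2:{ intros; unfold plus, scal; simpl; unfold mult; simpl. ring. }
  rewrite (@RInt_plus R_CompleteNormedModule). rewrite !(@RInt_scal R_CompleteNormedModule). rewrite RInt_K. unfold plus, scal; simpl; unfold mult; simpl. ring.
  - apply exK; auto.
  - apply (@ex_RInt_continuous R_CompleteNormedModule). intros; apply cont_K.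
  - apply (@ex_RInt_scal R_NormedModule). apply (@ex_RInt_continuous R_CompleteNormedModule). intros; apply cont_K.
  - apply (@ex_RInt_scal R_NormedModule). apply exK; auto.
Qed.

Lemma is_RInt_aff m c1 c0 : is_RInt (fun t => c1 * fejer_kernel m t + c0) (- PI) PI (c1 * PI + c0 * (2 * PI)).
Proof.
  apply (@is_RInt_ext R_NormedModule (fun t => plus (scal c1 (fejer_kernel m t)) c0)).
  { intros; reflexivity. }
  replace (c1 * PI + c0 * (2 * PI)) with (@plus R_NormedModule (scal c1 PI) (scal (PI - - PI) c0))
    by (unfold plus, scal; simpl; unfold mult; simpl; ring).
  apply (@is_RInt_plus R_NormedModule).
  apply (@is_RInt_scal R_NormedModule). apply int_K.
  apply (@is_RInt_const R_NormedModule).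
Qed.

Lemma fejer_conv (f : R -> R) x : (forall y, continuous f y) ->
  is_lim_seq (fun m => fejer_mean f m x) (f x).
Proof.
  intros Hf. apply is_lim_seq_Reals. intros eps Heps.
  set (phi := fun t => f (x + t) - f x).
  assert (Hphi : forall t, continuous phi t).
  { intros t. unfold phi. apply (continuous_minus (fun t => f (x+t)) (fun _ => f x)).
    apply cont_shift; auto. apply continuous_const. }
  assert (E : forall m, fejer_mean f m x - f x = / PI * RInt (fun t => phi t * fejer_kernel m t) (- PI) PI).
  { intros m. unfold fejer_mean.
    assert (Heq : RInt (fun t => f (x + t) * fejer_kernel m t) (- PI) PI = RInt (fun t => (f x + 1 * phi t) * fejer_kernel m t) (- PI) PI).
    { apply RInt_ext. intros t _. change ((f (x + t) * fejer_kernel m t)%R = ((f x + 1 * phi t) * fejer_kernel m t)%R). unfold phi; ring. }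
    rewrite Heq. rewrite RInt_affine by auto. assert (H := PI_gt0). field. lra. }
  set (eta := eps / 2).
  assert (Hc := Hf x). apply continuity_pt_filterlim in Hc.
  destruct (Hc eta ltac:(unfold eta; lra)) as [d0 [Hd0 Hd0']].
  set (d := Rmin d0 PI).
  assert (HPI := PI_gt0).
  assert (Hd : 0 < d <= PI) by (unfold d; split; [apply Rmin_pos; lra|apply Rmin_r]).
  assert (Hnear : forall t, Rabs t < d -> Rabs (phi t) <= eta).
  { intros t Ht. unfold phi. destruct (Req_dec t 0) as [->|Ht0].
    rewrite Rplus_0_r, Rminus_diag, Rabs_R0. unfold eta; lra.
    left. apply (Hd0' (x + t)). split. split; [exact I| lra].
    simpl. unfold R_dist. replace (x + t - x) with t by ring.
    apply Rlt_le_trans with (1 := Ht). apply Rmin_l. }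
  destruct (continuity_ab_maj (fun t => Rabs (phi t)) (- PI) PI ltac:(lra)) as [tM [HM _]].
  { intros c _. apply continuity_pt_filterlim. apply continuous_Rabs_comp. apply Hphi. }
  set (M := Rabs (phi tM)).
  assert (HM0 : 0 <= M) by apply Rabs_pos.
  set (s2 := sin (d / 2) ^ 2).
  assert (Hs2 : 0 < s2) by (apply pow2_gt_0; apply Rgt_not_eq; apply sin_gt_0; lra).
  destruct (INR_unbounded (2 * M / (eps * s2))) as [N HN].
  exists N. intros m Hm. unfold R_dist. rewrite E.
  assert (Hm1 : 0 < INR m + 1) by (assert (H:=pos_INR m); lra).
  assert (HNm : INR N <= INR m) by (apply le_INR; lia).
  set (Bm := / (2 * (INR m + 1) * s2)).
  assert (HB : 0 < Bm) by (unfold Bm; apply Rinv_0_lt_compat; nra).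
  assert (Hpt : forall t, - PI <= t <= PI -> Rabs (phi t * fejer_kernel m t) <= eta * fejer_kernel m t + M * Bm).
  { intros t Ht. rewrite Rabs_mult, (Rabs_pos_eq (fejer_kernel m t)) by apply K_ge0.
    assert (HK := K_ge0 m t).
    destruct (Rlt_le_dec (Rabs t) d) as [h|h].
    - assert (Rabs (phi t) <= eta) by auto. nra.
    - assert (Rabs (phi t) <= M) by (apply HM; lra).
      assert (fejer_kernel m t <= Bm) by (apply K_bound; auto; split; auto; apply Rabs_le; lra).
      assert (0 <= eta) by (unfold eta; lra).
      assert (Rabs (phi t) * fejer_kernel m t <= M * Bm) by (apply Rmult_le_compat; auto; apply Rabs_pos).
      nra. }
  assert (Hint : Rabs (RInt (fun t => phi t * fejer_kernel m t) (- PI) PI) <= eta * PI + M * Bm * (2 * PI)).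
  { apply Rle_trans with (RInt (fun t => Rabs (phi t * fejer_kernel m t)) (- PI) PI).
    apply abs_RInt_le. lra. apply exK; auto.
    rewrite <- (is_RInt_unique _ _ _ _ (is_RInt_aff m eta (M * Bm))).
    apply RInt_le. lra.
    apply (@ex_RInt_continuous R_CompleteNormedModule). intros; apply continuous_Rabs_comp. apply cont_mulK; auto.
    eexists; apply is_RInt_aff.
    intros t Ht. assert (H := Hpt t ltac:(lra)). lra. }
  rewrite Rabs_mult, Rabs_pos_eq by (left; apply Rinv_0_lt_compat; lra).
  apply Rle_lt_trans with (/ PI * (eta * PI + M * Bm * (2 * PI))).
  apply Rmult_le_compat_l; [left; apply Rinv_0_lt_compat; lra|auto].
  replace (/ PI * (eta * PI + M * Bm * (2 * PI))) with (eta + 2 * M * Bm) by (field; lra).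
  assert (HMB : 2 * M * Bm < eps / 2).
  { unfold Bm. apply Rmult_lt_reg_r with (2 * (INR m + 1) * s2). nra.
    rewrite Rmult_assoc, Rinv_l by nra. rewrite Rmult_1_r.
    assert (HN' : 2 * M / (eps * s2) < INR m + 1) by lra.
    apply Rmult_lt_compat_r with (r := eps * s2) in HN'; [|nra].
    unfold Rdiv in HN'. rewrite Rmult_assoc, Rinv_l in HN' by nra. nra. }
  unfold eta; lra.
Qed.



Lemma psum_nonneg F n : (forall j, (j < n)%nat -> 0 <= F j) -> 0 <= psum F n.
Proof. induction n; intros H; simpl; [lra|]. assert (0 <= F n) by (apply H; lia). assert (0 <= psum F n) by (apply IHn; intros; apply H; lia). lra. Qed.

Lemma psum_le F G n : (forall j, (j < n)%nat -> F j <= G j) -> psum F n <= psum G n.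
Proof. induction n; intros H; simpl; [lra|]. assert (F n <= G n) by (apply H; lia). assert (psum F n <= psum G n) by (apply IHn; intros; apply H; lia). lra. Qed.

Lemma psum_plus F G n : psum (fun j => F j + G j) n = psum F n + psum G n.
Proof. induction n; simpl; [ring|]. rewrite IHn. ring. Qed.

Lemma lim_psum (u : nat -> nat -> R) (l : nat -> R) n :
  (forall j, is_lim_seq (fun m => u m j) (l j)) -> is_lim_seq (fun m => psum (u m) n) (psum l n).
Proof.
  intros H. induction n.
  - simpl. apply is_lim_seq_const.
  - simpl. apply (is_lim_seq_plus' (fun m => psum (u m) n) (fun m => u m n)); auto.
Qed.

Lemma dir2 p nu a f : 1 <= p -> (forall x, continuous f x) ->
  bounded_in_Vp p nu a (fejer_mean f) -> in_Vp p nu a f.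
Proof.
  intros Hp Hf [C HC]. exists C. split.
  - intros n s t Hn Hfam.
    assert (HC0 : 0 <= C * nu n).
    { destruct (HC O) as [H1 _]. eapply Rle_trans; [|apply (H1 n s t Hn Hfam)]. apply powr_ge0. }
    assert (Hlim : is_lim_seq (fun m => psum (fun j => powr (Rabs (fejer_mean f m (t j) - fejer_mean f m (s j))) p) n)
                     (psum (fun j => powr (Rabs (f (t j) - f (s j))) p) n)).
    { apply (lim_psum (fun m j => powr (Rabs (fejer_mean f m (t j) - fejer_mean f m (s j))) p)
                      (fun j => powr (Rabs (f (t j) - f (s j))) p)).
      intros j. apply (is_lim_seq_continuous (fun y => powr (Rabs y) p)).
      apply powr_abs_cont; auto.
      apply is_lim_seq_minus'; apply fejer_conv; auto. }
    assert (Hle : forall m, psum (fun j => powr (Rabs (fejer_mean f m (t j) - fejer_mean f m (s j))) p) n <= powr (C * nu n) p).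
    { intros m. apply powr_le_inv; auto. apply psum_nonneg; intros; apply powr_ge0. lra.
      destruct (HC m) as [H1 _]. apply (H1 n s t Hn Hfam). }
    assert (HL := is_lim_seq_le _ _ _ _ Hle Hlim (is_lim_seq_const _)). simpl in HL.
    unfold pvar_sum. apply powr_le_inv2; auto. apply psum_nonneg; intros; apply powr_ge0. lra.
  - intros x Hx.
    assert (Hle : forall m, Rabs (fejer_mean f m x) <= C) by (intros m; destruct (HC m) as [_ H2]; auto).
    assert (HL := is_lim_seq_le _ _ _ _ Hle (is_lim_seq_abs _ _ (fejer_conv f x Hf)) (is_lim_seq_const _)).
    simpl in HL. auto.
Qed.


Lemma per_m (f : R -> R) (Hper : periodic2pi f) x : f (x - 2 * PI) = f x.
Proof. rewrite <- (Hper (x - 2 * PI)). f_equal; ring. Qed.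

Lemma window (p : R) (f : R -> R) (a : R) (B : nat -> R) (Hp : 1 <= p) (Hper : periodic2pi f)
  (HV : forall n s t, (1 <= n)%nat -> nonoverlapping_family a n s t ->
  psum (fun j => powr (Rabs (f (t j) - f (s j))) p) n <= B n) b n s t : a <= b <= a + 2 * PI -> (1 <= n)%nat ->
  (forall j, (j < n)%nat -> b <= s j <= t j /\ t j <= b + 2 * PI) ->
  (forall i j, (i < n)%nat -> (j < n)%nat -> i <> j -> t i <= s j \/ t j <= s i) ->
  psum (fun j => powr (Rabs (f (t j) - f (s j))) p) n <= powr 2 p * (B n + B n).
Proof.
  intros Hb Hn Hin Hdis. set (P := a + 2 * PI).
  set (sA := fun j => if Rle_dec (t j) P then s j else if Rle_dec P (s j) then s j - 2 * PI else s j).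
  set (tA := fun j => if Rle_dec (t j) P then t j else if Rle_dec P (s j) then t j - 2 * PI else P).
  set (sB := fun j : nat => a).
  set (tB := fun j => if Rle_dec (t j) P then a else if Rle_dec P (s j) then a else t j - 2 * PI).
  assert (HPI := PI_gt0).
  assert (HA : nonoverlapping_family a n sA tA).
  { split.
    - intros j Hj. destruct (Hin j Hj). unfold sA, tA, P in *.
      destruct (Rle_dec (t j) (a + 2*PI)); [lra|]. destruct (Rle_dec (a + 2*PI) (s j)); lra.
    - intros i j Hi Hj Hij. destruct (Hin i Hi). destruct (Hin j Hj).
      destruct (Hdis i j Hi Hj Hij); unfold sA, tA, P in *;
      destruct (Rle_dec (t i) (a + 2*PI)); destruct (Rle_dec (t j) (a + 2*PI));
      try destruct (Rle_dec (a + 2*PI) (s i)); try destruct (Rle_dec (a + 2*PI) (s j)); lra. }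
  assert (HB : nonoverlapping_family a n sB tB).
  { split.
    - intros j Hj. destruct (Hin j Hj). unfold sB, tB, P in *.
      destruct (Rle_dec (t j) (a + 2*PI)); [lra|]. destruct (Rle_dec (a + 2*PI) (s j)); lra.
    - intros i j Hi Hj Hij. destruct (Hin i Hi). destruct (Hin j Hj).
      destruct (Hdis i j Hi Hj Hij); unfold sB, tB, P in *;
      destruct (Rle_dec (t i) (a + 2*PI)); destruct (Rle_dec (t j) (a + 2*PI));
      try destruct (Rle_dec (a + 2*PI) (s i)); try destruct (Rle_dec (a + 2*PI) (s j)); lra. }
  assert (Hsplit : forall j, f (t j) - f (s j) = (f (tA j) - f (sA j)) + (f (tB j) - f (sB j))).
  { intros j. unfold sA, tA, sB, tB.
    destruct (Rle_dec (t j) P). ring.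
    destruct (Rle_dec P (s j)). rewrite !(per_m f Hper). ring.
    rewrite (per_m f Hper). unfold P. rewrite Hper. ring. }
  apply Rle_trans with (psum (fun j => powr 2 p * (powr (Rabs (f (tA j) - f (sA j))) p + powr (Rabs (f (tB j) - f (sB j))) p)) n).
  - apply psum_le. intros j _. rewrite Hsplit. apply powr_add_le; auto.
  - rewrite <- psum_scal, psum_plus. apply Rmult_le_compat_l. apply powr_ge0.
    apply Rplus_le_compat; apply HV; auto.
Qed.

Lemma window_shift (p : R) (f : R -> R) (a : R) (B : nat -> R) (Hp : 1 <= p) (Hper : periodic2pi f)
  (HV : forall n s t, (1 <= n)%nat -> nonoverlapping_family a n s t ->
  psum (fun j => powr (Rabs (f (t j) - f (s j))) p) n <= B n) tau n s t : - PI <= tau <= PI -> (1 <= n)%nat -> nonoverlapping_family a n s t ->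
  psum (fun j => powr (Rabs (f (t j + tau) - f (s j + tau))) p) n <= powr 2 p * (B n + B n).
Proof.
  intros Htau Hn [Hin Hdis]. assert (HPI := PI_gt0).
  destruct (Rle_dec 0 tau).
  - apply (window p f a B Hp Hper HV (a + tau) n (fun j => s j + tau) (fun j => t j + tau)); auto. lra.
    intros j Hj; destruct (Hin j Hj); lra.
    intros i j Hi Hj Hij; destruct (Hdis i j Hi Hj Hij); lra.
  - rewrite (psum_ext _ (fun j => powr (Rabs (f (t j + tau + 2 * PI) - f (s j + tau + 2 * PI))) p)).
    apply (window p f a B Hp Hper HV (a + tau + 2 * PI) n (fun j => s j + tau + 2 * PI) (fun j => t j + tau + 2 * PI)); auto. lra.
    intros j Hj; destruct (Hin j Hj); lra.
    intros i j Hi Hj Hij; destruct (Hdis i j Hi Hj Hij); lra.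
    intros j _. rewrite !Hper. auto.
Qed.



Lemma RInt_extR (f g : R -> R) a b : (forall x, f x = g x) -> RInt f a b = RInt g a b.
Proof. intros H. apply RInt_ext. intros; apply H. Qed.

Lemma RInt_lin (h1 h2 : R -> R) m c : (forall t, continuous h1 t) -> (forall t, continuous h2 t) ->
  RInt (fun t => (h1 t + c * h2 t) * fejer_kernel m t) (- PI) PI =
  RInt (fun t => h1 t * fejer_kernel m t) (- PI) PI + c * RInt (fun t => h2 t * fejer_kernel m t) (- PI) PI.
Proof.
  intros H1 H2.
  assert (Heq : RInt (fun t => (h1 t + c * h2 t) * fejer_kernel m t) (- PI) PI =
     RInt (fun t => plus (h1 t * fejer_kernel m t) (scal c (h2 t * fejer_kernel m t))) (- PI) PI).
  { apply RInt_ext. intros t _. unfold plus, scal; simpl; unfold mult; simpl. ring. }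
  rewrite Heq. rewrite (@RInt_plus R_CompleteNormedModule). rewrite (@RInt_scal R_CompleteNormedModule).
  reflexivity.
  apply exK; auto. apply exK; auto.
  apply (@ex_RInt_scal R_NormedModule). apply exK; auto.
Qed.

Lemma RInt_constK m A : RInt (fun t => A * fejer_kernel m t) (- PI) PI = A * PI.
Proof.
  rewrite (RInt_extR (fun t => A * fejer_kernel m t) (fun t => A * fejer_kernel m t + 0)) by (intros; ring).
  rewrite (is_RInt_unique _ _ _ _ (is_RInt_aff m A 0)). rewrite Rmult_0_l, Rplus_0_r; reflexivity.
Qed.

Lemma RInt_psumK (c : nat -> R) (g : nat -> R -> R) m n : (forall j t, continuous (g j) t) ->
  RInt (fun t => psum (fun j => c j * g j t) n * fejer_kernel m t) (- PI) PI =
  psum (fun j => c j * RInt (fun t => g j t * fejer_kernel m t) (- PI) PI) n.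
Proof.
  intros Hg. induction n.
  - simpl. rewrite RInt_constK. ring.
  - rewrite psum_S. rewrite <- IHn.
    rewrite (RInt_extR (fun t => psum (fun j => c j * g j t) (S n) * fejer_kernel m t) (fun t => (psum (fun j => c j * g j t) n + c n * g n t) * fejer_kernel m t)).
    apply RInt_lin; auto. intros t; apply cont_psum. intros j.
    apply (continuous_mult (fun _ => c j) (g j)). apply continuous_const. apply Hg.
    intros; reflexivity.
Qed.



Lemma dir1 p nu a f : 1 <= p -> modulus_of_variation nu -> (forall x, continuous f x) ->
  periodic2pi f -> in_Vp p nu a f -> bounded_in_Vp p nu a (fejer_mean f).
Proof.
  intros Hp [Hnu _] Hf Hper [C [HV1 HV2]].
  assert (HPI := PI_gt0).
  assert (HC0 : 0 <= C) by (eapply Rle_trans; [apply Rabs_pos|apply (HV2 a); lra]).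
  assert (HVs : forall n s t, (1 <= n)%nat -> nonoverlapping_family a n s t ->
    psum (fun j => powr (Rabs (f (t j) - f (s j))) p) n <= powr (C * nu n) p).
  { intros n s t Hn Hfam. apply powr_le_inv. apply psum_nonneg; intros; apply powr_ge0.
    assert (0 < nu n) by auto. nra. lra. apply HV1; auto. }
  assert (Hwin := window_shift p f a (fun n => powr (C * nu n) p) Hp Hper HVs).
  assert (HW : forall n, (1 <= n)%nat -> powr 2 p * (powr (C * nu n) p + powr (C * nu n) p) <= powr (4 * (C * nu n)) p).
  { intros n Hn. assert (0 < nu n) by auto.
    replace 4 with (2 * 2) by ring. rewrite (powr_mult (2 * 2) (C * nu n)) by nra. rewrite (powr_mult 2 2) by lra.
    assert (H2 := powr_2 p Hp). assert (HX := powr_ge0 (C * nu n) p).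
    assert (powr 2 p * powr (C * nu n) p * 2 <= powr 2 p * powr (C * nu n) p * powr 2 p)
      by (apply Rmult_le_compat_l; [apply Rmult_le_pos; lra| lra]). nra. }
  assert (Hbound : forall y, a - PI <= y <= a + 3 * PI -> Rabs (f y) <= C).
  { intros y Hy. destruct (Rlt_le_dec y a).
    - rewrite <- Hper. apply HV2. lra.
    - destruct (Rle_lt_dec y (a + 2 * PI)). apply HV2; lra.
      rewrite <- (per_m f Hper). apply HV2; lra. }
  exists (4 * C). intros m. split.
  - intros n s t Hn Hfam.
    set (g := fun j tau => f (t j + tau) - f (s j + tau)).
    set (mj := fun j => fejer_mean f m (t j) - fejer_mean f m (s j)).
    assert (Hgc : forall j tau, continuous (g j) tau).
    { intros j tau. unfold g. apply (continuous_minus (fun tau => f (t j + tau)) (fun tau => f (s j + tau)));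
      apply cont_shift; auto. }
    assert (Hmj : forall j, RInt (fun tau => g j tau * fejer_kernel m tau) (- PI) PI = PI * mj j).
    { intros j. unfold mj, fejer_mean.
      rewrite (RInt_extR (fun tau => g j tau * fejer_kernel m tau) (fun tau => (f (t j + tau) + (-1) * f (s j + tau)) * fejer_kernel m tau))
        by (intros; unfold g; ring).
      rewrite RInt_lin. match goal with |- ?u = ?v => change (@eq R u v) end. field. lra.
      intros; apply cont_shift; auto. intros; apply cont_shift; auto. }
    set (W := powr (4 * (C * nu n)) p).
    set (sl := fun j => slope p (mj j)).
    set (P := fun j => powr (Rabs (mj j)) p).
    set (A0 := psum (fun j => P j - sl j * mj j) n).
    set (h := fun tau => psum (fun j => sl j * g j tau) n).
    assert (Hhc : forall tau, continuous h tau).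
    { intros tau. unfold h. apply cont_psum. intros j.
      apply (continuous_mult (fun _ => sl j) (g j)). apply continuous_const. apply Hgc. }
    assert (Hpt : forall tau, - PI <= tau <= PI -> A0 + 1 * h tau <= W).
    { intros tau Htau.
      assert (E : A0 + 1 * h tau = psum (fun j => P j + sl j * (g j tau - mj j)) n).
      { unfold A0, h. rewrite Rmult_1_l, <- psum_plus. apply psum_ext. intros; ring. }
      rewrite E. apply Rle_trans with (psum (fun j => powr (Rabs (g j tau)) p) n).
      apply psum_le. intros j _. unfold P, sl. apply support; auto.
      eapply Rle_trans; [apply (Hwin tau n s t Htau Hn Hfam)|]. apply HW; auto. }
    assert (Hint : RInt (fun tau => (A0 + 1 * h tau) * fejer_kernel m tau) (- PI) PI = PI * psum P n).
    { rewrite RInt_affine by auto. unfold h. rewrite RInt_psumK by auto.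
      rewrite (psum_ext _ (fun j => PI * (sl j * mj j))) by (intros; rewrite Hmj; ring).
      rewrite <- psum_scal. unfold A0.
      replace (psum P n) with (psum (fun j => (P j - sl j * mj j) + sl j * mj j) n) by (apply psum_ext; intros; ring).
      rewrite psum_plus. match goal with |- ?u = ?v => change (@eq R u v) end. ring. }
    assert (Hle : RInt (fun tau => (A0 + 1 * h tau) * fejer_kernel m tau) (- PI) PI <= RInt (fun tau => W * fejer_kernel m tau) (- PI) PI).
    { apply RInt_le. lra.
      apply exK. intros; apply (continuous_plus (fun _ => A0) (fun tau => 1 * h tau)). apply continuous_const.
      apply (continuous_mult (fun _ => 1) h). apply continuous_const. auto.
      apply exK. intros; apply continuous_const.
      intros tau Htau. apply Rmult_le_compat_r. apply K_ge0. apply Hpt; lra. }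
    rewrite Hint, RInt_constK in Hle.
    assert (HPW : psum P n <= W) by nra.
    unfold pvar_sum. replace (4 * C * nu n) with (4 * (C * nu n)) by ring.
    apply powr_le_inv2. apply psum_nonneg; intros; apply powr_ge0.
    assert (0 < nu n) by auto. nra. lra. exact HPW.
  - intros x Hx. unfold fejer_mean.
    rewrite Rabs_mult, Rabs_pos_eq by (left; apply Rinv_0_lt_compat; lra).
    apply Rle_trans with (/ PI * (C * PI)); [|replace (/ PI * (C * PI)) with C by (field; lra); lra].
    apply Rmult_le_compat_l. left; apply Rinv_0_lt_compat; lra.
    apply Rle_trans with (RInt (fun t => Rabs (f (x + t) * fejer_kernel m t)) (- PI) PI).
    apply abs_RInt_le. lra. apply exK; intros; apply cont_shift; auto.
    rewrite <- (RInt_constK m C).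
    apply RInt_le. lra.
    apply (@ex_RInt_continuous R_CompleteNormedModule). intros; apply continuous_Rabs_comp. apply cont_mulK; apply cont_shift; auto.
    apply exK; intros; apply continuous_const.
    intros t Ht. rewrite Rabs_mult, (Rabs_pos_eq (fejer_kernel m t)) by apply K_ge0.
    apply Rmult_le_compat_r. apply K_ge0. apply Hbound. lra.
Qed.


Theorem proposition3p4 (p : R) (nu : nat -> R) (f : R -> R) (a : R) :
  1 <= p ->
  modulus_of_variation nu ->
  is_lim_seq nu p_infty ->
  (forall k, (1 <= k)%nat -> nu (S k) / powr (INR (S k)) (/ p) <= nu k / powr (INR k) (/ p)) ->
  is_lim_seq (fun k => nu k / powr (INR k) (/ p)) 0 ->
  (forall x, continuous f x) ->
  periodic2pi f ->
  (in_Vp p nu a f <-> bounded_in_Vp p nu a (fejer_mean f)).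
Proof.
  intros Hp Hnu _ _ _ Hf Hper. split.
  - apply dir1; auto.
  - apply dir2; auto.
Qed.
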